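(* Let $(A,u_A)$ be an irreducible abstract state space. The following are equivalent: (a) $A$ is weakly self-dual and homogeneous; (b) every normalized state $\alpha$ in the interior of $A_+$ is the marginal of an isomorphism state in $A\otimes_{\max}A$, i.e., there is a state $\omega\in A\otimes_{\max}A$ such that $\hat\omega:A^*\to A$ is an order-isomorphism and $\hat\omega(u_A)=\alpha$.
   Context: An abstract state space is a pair $(A,u_A)$ where $A$ is a finite-dimensional real vector space with a closed, pointed, generating convex cone $A_+$, and $u_A$ is an interior point of the dual cone $A^*_+$; a normalized state is $\alpha\in A_+$ with $u_A(\alpha)=1$. $A$ is irreducible if there is no decomposition $A=A_1\oplus A_2$ into nonzero subspaces with $A_+=(A_+\cap A_1)+(A_+\cap A_2)$. An order-isomorphism is a linear bijection $\phi$ with $\phi(x)\ge0$ iff $x\ge0$. $A$ is weakly self-dual if there exists an order-isomorphism $A^*\to A$. $A$ is homogeneous if its group of order-automorphisms acts transitively on the interior of $A_+$. $A\otimes_{\max}A$ is the space of bilinear forms on $A^*\times A^*$ nonnegative on $A^*_+\times A^*_+$; a state is such a form with $\omega(u_A,u_A)=1$; $\hat\omega:A^*\to A$ is $\hat\omega(a)(b)=\omega(a,b)$, and $\hat\omega(u_A)$ is the marginal on the second factor. An isomorphism state is a state $\omega$ with $\hat\omega$ an order-isomorphism. *)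

(* Defs.v *)
(* A finite-dimensional real vector space is modelled as
   'rV[R]_n (R : realType); its dual A^* is identified with 'rV[R]_n via the
   standard pairing  <f, x> = \sum_i f_i x_i.  Linear maps are matrices acting
   on the right of row vectors. *)
From HB Require Import structures.
From mathcomp Require Import all_boot all_order all_algebra.
From mathcomp Require Import reals.
Set Implicit Arguments. Unset Strict Implicit. Unset Printing Implicit Defensive.
Import Order.TTheory GRing.Theory Num.Theory.
Local Open Scope ring_scope.

Section Defs.
Variables (R : realType) (n : nat).
Notation vec := 'rV[R]_n.

Definition dot (f x : vec) : R := \sum_(i < n) f 0 i * x 0 i.

(* topology of R^n (sup-norm balls; all norms are equivalent) *)
Definition interior (S : vec -> Prop) (x : vec) : Prop :=
  exists2 e : R, 0 < e & forall y : vec, (forall i, `|y 0 i - x 0 i| < e) -> S y.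
Definition closed_set (S : vec -> Prop) : Prop :=
  forall x : vec, ~ S x ->
    exists2 e : R, 0 < e & forall y : vec, (forall i, `|y 0 i - x 0 i| < e) -> ~ S y.

Definition convex_cone (K : vec -> Prop) : Prop :=
  [/\ K 0, (forall x y, K x -> K y -> K (x + y)) &
      (forall (t : R) x, 0 <= t -> K x -> K (t *: x))].
Definition pointed (K : vec -> Prop) : Prop := forall x, K x -> K (- x) -> x = 0.
Definition generating (K : vec -> Prop) : Prop :=
  forall x, exists a b, [/\ K a, K b & x = a - b].

Definition dual_cone (K : vec -> Prop) (f : vec) : Prop := forall x, K x -> 0 <= dot f x.

Definition abstract_state_space (K : vec -> Prop) (u : vec) : Prop :=
  [/\ convex_cone K, closed_set K, pointed K, generating K & interior (dual_cone K) u].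

(* no decomposition A = A1 (+) A2 into nonzero subspaces with
   A_+ = (A_+ /\ A1) + (A_+ /\ A2); subspaces are row spaces of matrices *)
Definition irreducible (K : vec -> Prop) : Prop :=
  ~ exists V1 V2 : 'M[R]_n,
      [/\ V1 != 0, V2 != 0, (V1 + V2 == 1%:M)%MS, mxdirect (V1 + V2) &
          forall x, K x <-> exists a b,
             [/\ K a, (a <= V1)%MS, K b, (b <= V2)%MS & x = a + b]].

Definition order_iso_dual (K : vec -> Prop) (M : 'M[R]_n) : Prop :=
  M \in unitmx /\ forall f : vec, K (f *m M) <-> dual_cone K f.

Definition order_auto (K : vec -> Prop) (M : 'M[R]_n) : Prop :=
  M \in unitmx /\ forall x : vec, K (x *m M) <-> K x.

Definition weakly_self_dual (K : vec -> Prop) : Prop :=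
  exists M, order_iso_dual K M.

Definition homogeneous (K : vec -> Prop) : Prop :=
  forall x y, interior K x -> interior K y ->
    exists M, order_auto K M /\ x *m M = y.

(* bilinear form omega(a,b) = a W b^T on A^* x A^*; element of A (x)_max A *)
Definition bilin (W : 'M[R]_n) (a b : vec) : R := dot b (a *m W).
Definition in_max_tensor (K : vec -> Prop) (W : 'M[R]_n) : Prop :=
  forall a b, dual_cone K a -> dual_cone K b -> 0 <= bilin W a b.
Definition max_tensor_state (K : vec -> Prop) (u : vec) (W : 'M[R]_n) : Prop :=
  in_max_tensor K W /\ bilin W u u = 1.
(* hat omega : A^* -> A is  a |-> a *m W, since <b, a *m W> = omega(a,b) *)
Definition hat (W : 'M[R]_n) (a : vec) : vec := a *m W.

End Defs.

(* Main.v *)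
Require Import Defs.
From HB Require Import structures.
From mathcomp Require Import all_boot all_order all_algebra.
From mathcomp Require Import reals lra.
Import Order.TTheory GRing.Theory Num.Theory.
Local Open Scope ring_scope.

Section Helpers.
Variables (R : realType) (n : nat).
Implicit Types (K : 'rV[R]_n -> Prop) (x y u f : 'rV[R]_n).

Lemma dotE f x : dot f x = (f *m x^T) 0 0.
Proof. rewrite /dot !mxE; apply: eq_bigr => i _; by rewrite mxE. Qed.

Lemma cone_scale K c x : convex_cone K -> 0 < c -> K (c *: x) <-> K x.
Proof.
case=> _ _ Hs hc; split => H; last by apply: Hs => //; exact: ltW.
have -> : x = c^-1 *: (c *: x) by rewrite scalerA mulVf ?scale1r // gt_eqF.
by apply: Hs => //; rewrite invr_ge0 ltW.
Qed.

Lemma interior_scale K c x : convex_cone K -> 0 < c -> interior K x -> interior K (c *: x).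
Proof.
move=> Hc hc [e he He]; exists (c * e); first by rewrite mulr_gt0.
move=> y Hy; have -> : y = c *: (c^-1 *: y) by rewrite scalerA mulfV ?scale1r // gt_eqF.
apply/(@cone_scale K c _ Hc hc); apply: He => i.
rewrite !mxE.
have -> : c^-1 * y 0 i - x 0 i = c^-1 * (y 0 i - c * x 0 i).
  by rewrite mulrBr mulrA mulVf ?mul1r // gt_eqF.
rewrite normrM gtr0_norm ?invr_gt0 //.
have := Hy i; rewrite !mxE => H.
by rewrite -(ltr_pM2l hc) mulrA mulfV ?mul1r // ?gt_eqF.
Qed.

Lemma sum_cone K (I : finType) (F : I -> 'rV[R]_n) :
  convex_cone K -> (forall i, K (F i)) -> K (\sum_i F i).
Proof. case=> H0 HD _ HF; apply: big_ind => //. Qed.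

Lemma exists_interior K : convex_cone K -> generating K -> exists x, interior K x.
Proof.
move=> Hc Hg.
have /fin_all_exists [ab Hab] : forall i : 'I_n, exists p : 'rV[R]_n * 'rV[R]_n,
   [/\ K p.1, K p.2 & delta_mx 0 i = p.1 - p.2].
  move=> i; have [a [b [Ha Hb E]]] := Hg (delta_mx 0 i).
  by exists (a, b).
pose c := \sum_i ((ab i).1 + (ab i).2).
exists c; exists 1 => // y Hy.
have Ey : \sum_i ((1 + (y - c) 0 i) *: (ab i).1 + (1 - (y - c) 0 i) *: (ab i).2) = y.
  rewrite (eq_bigr (fun i => ((ab i).1 + (ab i).2) + (y - c) 0 i *: delta_mx 0 i)); last first.
    move=> i _; have [_ _ ->] := Hab i.
    rewrite scalerDl scalerBl !scale1r scalerBr.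
    by rewrite addrACA.
  by rewrite big_split /= -row_sum_delta addrC subrK.
rewrite -Ey; apply: sum_cone => // i; have [Ha Hb _] := Hab i.
case: Hc => _ HD HS; apply: HD; apply: HS => //;
 have := Hy i; rewrite !mxE ltr_norml => /andP [h1 h2]; lra.
Qed.

Lemma interior_nonzero K x : (0 < n)%N -> pointed K -> interior K x -> x != 0.
Proof.
move=> hn Hp [e he He]; apply/eqP => x0; subst x.
pose i0 := Ordinal hn.
pose v : 'rV[R]_n := (e / 2) *: delta_mx 0 i0.
have Hv : forall w : 'rV[R]_n, w = v \/ w = - v -> K w.
  move=> w Hw; apply: He => i; rewrite !mxE subr0.
  have he2 : 0 < e / 2 by rewrite divr_gt0.
  case: Hw => ->; rewrite !mxE eqxx /=; case: (i == i0) => /=;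
   rewrite ?mulr1 ?mulr0 ?normrN ?normr0 ?gtr0_norm //; lra.
have := Hp v (Hv v (or_introl erefl)) (Hv _ (or_intror erefl)).
move/matrixP => /(_ 0 i0); rewrite !mxE !eqxx mulr1 => /eqP; lra.
Qed.

Lemma dotBZ f g x d : dot (f - d *: g) x = dot f x - d * dot g x.
Proof.
rewrite /dot mulr_sumr -sumrB; apply: eq_bigr => i _; by rewrite !mxE mulrBl mulrA.
Qed.

Lemma interior_in K x : interior K x -> K x.
Proof. by case=> e he He; apply: He => i; rewrite subrr normr0. Qed.

Lemma dot_pos K u x : abstract_state_space K u -> interior K x -> x != 0 -> 0 < dot u x.
Proof.
case=> Hc _ _ _ [e he He] Hx xn0.
pose S := 1 + \sum_i `|x 0 i|.
have S0 : 0 < S by rewrite /S ltr_pwDl // sumr_ge0.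
pose d := e / S.
have d0 : 0 < d by rewrite divr_gt0.
have Hd : dual_cone K (u - d *: x).
  apply: He => i; rewrite !mxE addrAC subrr add0r normrN normrM gtr0_norm //.
  have hr : 0 <= \sum_(j | j != i) `|x 0 j| by apply: sumr_ge0.
  have hx : `|x 0 i| < S by rewrite /S (bigD1 i) //=; lra.
  apply: (@lt_le_trans _ _ (d * S)); first by rewrite ltr_pM2l.
  by rewrite /d divfK ?gt_eqF.
have h0 : forall i, 0 <= x 0 i * x 0 i by move=> i; rewrite -expr2 sqr_ge0.
have hxx : 0 < dot x x.
  rewrite lt_def /dot (sumr_ge0 _ (fun i _ => h0 i)) andbT.
  apply/eqP => H; move/eqP: xn0; apply; apply/rowP => i; rewrite mxE.
  by have /eqP := @psumr_eq0P _ _ _ _ (fun i _ => h0 i) H i isT; rewrite mulf_eq0 orbb => /eqP.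
have := Hd x (interior_in _ _ Hx); rewrite dotBZ.
have := mulr_gt0 d0 hxx; lra.
Qed.
Lemma iso_interior K M u : order_iso_dual K M -> interior (dual_cone K) u ->
  interior K (u *m M).
Proof.
case=> uM HM [e he He].
pose Mi := invmx M.
pose B := 1 + \sum_i \sum_j `|Mi i j|.
have hT : 0 <= \sum_i \sum_j `|Mi i j| by do 2!(apply: sumr_ge0 => ? _).
have B0 : 0 < B by rewrite /B; lra.
exists (e / B); first by rewrite divr_gt0.
move=> y Hy; have -> : y = (y *m Mi) *m M by rewrite mulmxKV.
apply/HM; apply: He => j.
have -> : (y *m Mi) 0 j - u 0 j = ((y - u *m M) *m Mi) 0 j.
  by rewrite mulmxBl mulmxK // !mxE.
rewrite mxE; apply: le_lt_trans (ler_norm_sum _ _ _) _.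
apply: (@le_lt_trans _ _ (\sum_i e / B * `|Mi i j|)).
  apply: ler_sum => i _; rewrite normrM ler_wpM2r //.
  by have := Hy i; rewrite !mxE => /ltW.
rewrite -mulr_sumr.
have hS : \sum_i `|Mi i j| <= \sum_i \sum_j `|Mi i j|.
  by apply: ler_sum => i _; rewrite (bigD1 j) //= lerDl sumr_ge0.
apply: (@lt_le_trans _ _ (e / B * B)).
  by rewrite ltr_pM2l ?divr_gt0 // /B; lra.
by rewrite divfK ?gt_eqF.
Qed.

Lemma dotZ u x c : dot u (c *: x) = c * dot u x.
Proof. by rewrite /dot mulr_sumr; apply: eq_bigr => i _; rewrite mxE mulrCA. Qed.

Lemma normalize K u x : abstract_state_space K u -> (0 < n)%N -> interior K x ->
  [/\ interior K ((dot u x)^-1 *: x), dot u ((dot u x)^-1 *: x) = 1 & 0 < dot u x].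
Proof.
move=> Hass npos Hx; have Hass' := Hass; case: Hass' => Hc _ Hp _ _.
have hx := dot_pos _ _ _ Hass Hx (interior_nonzero _ _ npos Hp Hx).
split => //; first by apply: interior_scale => //; rewrite invr_gt0.
by rewrite dotZ mulVf // gt_eqF.
Qed.

Lemma comp_iso K W M : order_iso_dual K W -> order_auto K M -> order_iso_dual K (W *m M).
Proof.
case=> uW HW [uM HM]; split; first by rewrite unitmx_mul uW uM.
move=> f; rewrite mulmxA; split => H.
  by apply/HW; apply/HM.
by apply/HM; apply/HW.
Qed.

End Helpers.
Arguments dot_pos {R n K u x}.
Arguments interior_nonzero {R n K x}.
Arguments interior_scale {R n K c x}.
Arguments iso_interior {R n K M u}.
Arguments comp_iso {R n K W M}.
Arguments normalize {R n K u x}.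
Arguments exists_interior {R n K}.
Arguments cone_scale {R n K c x}.

Lemma n0_case (R : realType) (K : 'rV[R]_0 -> Prop) u :
  abstract_state_space K u -> weakly_self_dual K /\ homogeneous K.
Proof.
case=> [[H0 _ _] _ _ _ _].
have z0 : forall v : 'rV[R]_0, v = 0 by move=> v; apply/rowP => -[].
split.
  exists 1%:M; split; first exact: unitmx1.
  move=> f; rewrite (z0 (f *m 1%:M)); split => // _ x _.
  by rewrite /dot big_ord0.
move=> x y _ _; exists 1%:M; split; last by rewrite mulmx1 (z0 x) (z0 y).
by split; [exact: unitmx1 | move=> z; rewrite mulmx1].
Qed.

Theorem corollary4p2 (R : realType) (n : nat) (K : 'rV[R]_n -> Prop) (u : 'rV[R]_n) :
  abstract_state_space K u -> irreducible K ->
  ((weakly_self_dual K /\ homogeneous K) <->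
   (forall alpha : 'rV[R]_n, interior K alpha -> dot u alpha = 1 ->
      exists W : 'M[R]_n,
        [/\ max_tensor_state K u W, order_iso_dual K W & hat W u = alpha])).
Proof.
move=> Hass _; have Hass' := Hass; case: Hass' => Hc Hcl Hp Hg Hu.
have Hten : forall W, order_iso_dual K W -> in_max_tensor K W.
  move=> W [_ HW] a b Ha Hb; rewrite /bilin; apply: Hb; exact/HW.
split.
  move=> [[W0 HW0] Hh] alpha Ha Hn.
  have Hi := iso_interior HW0 Hu.
  have [M [HM E]] := Hh _ _ Hi Ha.
  have HWM := comp_iso HW0 HM.
  exists (W0 *m M); split => //; last by rewrite /hat mulmxA E.
  by split; [exact: Hten | rewrite /bilin mulmxA E].
move=> Hb.
case: (posnP n) => [n0|npos].
  by subst n; exact: (n0_case _ _ _ Hass).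
have [x0 Hx0] := exists_interior Hc Hg.
split.
  have [Hi1 Hd1 _] := normalize Hass npos Hx0.
  have [W [_ HW _]] := Hb _ Hi1 Hd1.
  by exists W.
move=> x y Hx Hy.
have [Hix Hdx hx] := normalize Hass npos Hx.
have [Hiy Hdy hy] := normalize Hass npos Hy.
have [W1 [_ HW1 E1]] := Hb _ Hix Hdx.
have [W2 [_ HW2 E2]] := Hb _ Hiy Hdy.
case: (HW1) => uW1 HW1'; case: (HW2) => uW2 HW2'.
set cx := dot u x in hx Hix Hdx E1; set cy := dot u y in hy Hiy Hdy E2.
have hc : 0 < cy / cx by rewrite divr_gt0.
exists ((cy / cx) *: (invmx W1 *m W2)); split; first split.
- by rewrite unitmxZ ?unitfE ?gt_eqF // unitmx_mul unitmx_inv uW1 uW2.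
- move=> z; rewrite -scalemxAr (cone_scale Hc hc) mulmxA.
  split => H.
    by have := (HW2' (z *m invmx W1)).1 H => /HW1'; rewrite mulmxKV.
  by apply/HW2'; apply/HW1'; rewrite mulmxKV.
- have Ex : x = cx *: (u *m W1).
    by rewrite /hat in E1; rewrite E1 scalerA mulfV ?scale1r // gt_eqF.
  rewrite -scalemxAr mulmxA {1}Ex -scalemxAl mulmxK // -scalemxAl.
  rewrite /hat in E2; rewrite E2 !scalerA.
  have -> : cy / cx * cx * cy^-1 = 1 by rewrite divfK ?mulfV // gt_eqF.
  by rewrite scale1r.
Qed.
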